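(* Let $\mathbf{k}$ be a field, $\Gamma$ a $(d-1)$-dimensional simplicial complex with $n$ vertices, and $F$ a face of $\Gamma$ such that $\mathrm{lk}_\Gamma(F)$ has dimension $d'$ and $n'$ vertices. Then for every $1\le i\le n'-d'$ for which $M_i(\mathrm{lk}_\Gamma(F))$ is defined, $M_i(\mathrm{lk}_\Gamma(F))\le M_i(\Gamma)$.
   Context: A simplicial complex is a family of subsets of its vertex set closed under subsets containing all singletons. $\mathrm{lk}_\Gamma(F)=\{G\setminus F:F\subseteq G\in\Gamma\}$, regarded as a complex on its own vertex set. For a complex $\Delta$ with vertex set $V$, $M_i(\Delta)=\max\{|W|:W\subseteq V,\ \tilde H_{|W|-i-1}(\Delta[W];\mathbf{k})\ne0\}$ (the maximal degree shift of the $i$-th module in the minimal free resolution of the Stanley–Reisner ring), defined when this set is nonempty; $\Delta[W]$ is the induced subcomplex. *)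

(* Defs.v *)
(* Simplicial complexes as families of finite sets over a
   finite vertex type T; reduced simplicial homology over a field k defined
   literally as (cycles)/(boundaries) of the augmented oriented chain complex. *)
From HB Require Import structures.
From mathcomp Require Import all_boot all_order all_algebra.
Set Implicit Arguments. Unset Strict Implicit. Unset Printing Implicit Defensive.
Import Order.TTheory GRing.Theory Num.Theory.
Local Open Scope ring_scope.

Section Complexes.
Variable T : finType.

Definition is_complex (D : {set {set T}}) : Prop :=
  set0 \in D /\ forall s t : {set T}, s \in D -> t \subset s -> t \in D.

Definition vert (D : {set {set T}}) : {set T} := [set v | [set v] \in D].

Definition dimC (D : {set {set T}}) : int := (\max_(s in D) #|s|)%:Z - 1.

Definition induced (D : {set {set T}}) (W : {set T}) : {set {set T}} :=
  [set s in D | s \subset W].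

Definition link (G : {set {set T}}) (F : {set T}) : {set {set T}} :=
  [set s :\: F | s in G & F \subset s].

Variable k : fieldType.

(* j-chains of D: functions on faces, supported on faces of D with j+1
   vertices (j = -1 gives the augmentation degree spanned by the empty face) *)
Definition is_chain (D : {set {set T}}) (j : int) (c : {set T} -> k) : Prop :=
  forall s, c s != 0 -> (s \in D) /\ (#|s|%:Z = j + 1).

Definition bd (D : {set {set T}}) (c : {set T} -> k) (t : {set T}) : k :=
  \sum_(v in ~: t | (v |: t) \in D)
     (-1) ^+ #|[set u in t | enum_rank u < enum_rank v]%N| * c (v |: t).

(* \tilde H_j(D; k) <> 0 : there is a j-cycle that is not a j-boundary *)
Definition Hnz (D : {set {set T}}) (j : int) : Prop :=
  exists z : {set T} -> k,
    [/\ is_chain D j z, (forall t, bd D z t = 0) &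
        ~ (exists b : {set T} -> k,
             is_chain D (j + 1) b /\ forall t, bd D b t = z t)].

Definition Mwit (D : {set {set T}}) (i : nat) (W : {set T}) : Prop :=
  W \subset vert D /\ Hnz (induced D W) (#|W|%:Z - i%:Z - 1).

(* isM D i m : M_i(D) is defined and equals m *)
Definition isM (D : {set {set T}}) (i m : nat) : Prop :=
  (exists W, Mwit D i W /\ #|W| = m) /\ (forall W, Mwit D i W -> (#|W| <= m)%N).

End Complexes.

(* Main.v *)
Require Import Defs.
From mathcomp Require Import all_boot all_order all_algebra.
From mathcomp Require Import zify ring.
From Stdlib Require Import Classical.
Set Implicit Arguments. Unset Strict Implicit. Unset Printing Implicit Defensive.
Import Order.TTheory GRing.Theory Num.Theory.
Local Open Scope ring_scope.
Section S.
Variables (T : finType) (k : fieldType).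

Definition sg (t : {set T}) (u : T) : k :=
  (-1) ^+ #|[set w in t | enum_rank w < enum_rank u]%N|.

Definition bdU (c : {set T} -> k) (t : {set T}) : k :=
  \sum_(u in ~: t) sg t u * c (u |: t).

Definition supp (D : {set {set T}}) (c : {set T} -> k) :=
  forall s, c s != 0 -> s \in D.

Lemma bd_U D c t : supp D c -> bd D c t = bdU c t.
Proof.
move=> Hc; rewrite /bd /bdU big_mkcondr; apply: eq_bigr => u _.
case: ifP => // HD; have : c (u |: t) = 0.
  by apply/eqP; apply: contraFT HD => /Hc.
by move=> ->; rewrite mulr0.
Qed.

Definition HnzU (D : {set {set T}}) (j : int) : Prop :=
  exists z : {set T} -> k,
    [/\ is_chain D j z, (forall t, bdU z t = 0) &
        ~ (exists b : {set T} -> k,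
             is_chain D (j + 1) b /\ forall t, bdU b t = z t)].

Lemma chain_supp D j c : is_chain D j c -> supp D c.
Proof. by move=> H s /H []. Qed.

Lemma Hnz_U D j : Hnz k D j <-> HnzU D j.
Proof.
split=> -[z [Hz Hc Hn]]; exists z; split => //.
- by move=> t; rewrite -(bd_U t (chain_supp Hz)).
- move=> [b [Hb E]]; apply: Hn; exists b; split => // t.
  by rewrite (bd_U t (chain_supp Hb)).
- by move=> t; rewrite (bd_U t (chain_supp Hz)).
- move=> [b [Hb E]]; apply: Hn; exists b; split => // t.
  by rewrite -(bd_U t (chain_supp Hb)).
Qed.

Lemma bdU_lin (f g : {set T} -> k) e t :
  bdU (fun s => f s - e * g s) t = bdU f t - e * bdU g t.
Proof.
rewrite /bdU mulr_sumr -sumrB; apply: eq_bigr => u _.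
by rewrite mulrBr !mulrA [e * _]mulrC.
Qed.

Lemma bdU_ext (f g : {set T} -> k) t : f =1 g -> bdU f t = bdU g t.
Proof. by move=> E; apply: eq_bigr => u _; rewrite E. Qed.

Lemma card_sep (P : pred T) x (t : {set T}) : x \notin t ->
  #|[set w in x |: t | P w]| = (P x + #|[set w in t | P w]|)%N.
Proof.
move=> xt; case Px: (P x).
  have -> : [set w in x |: t | P w] = x |: [set w in t | P w].
    apply/setP => w; rewrite !inE; case: eqP => [->|] //=; by rewrite Px.
  by rewrite cardsU1 inE (negbTE xt).
have -> : [set w in x |: t | P w] = [set w in t | P w].
  apply/setP => w; rewrite !inE; case: eqP => [->|] //=; by rewrite Px andbF.
by [].
Qed.

Lemma sign_add (a b : nat) : (-1) ^+ (a + b) = (-1) ^+ a * (-1) ^+ b :> k.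
Proof. by rewrite exprD. Qed.

Lemma sign_sq (a : nat) : (-1) ^+ a * (-1) ^+ a = 1 :> k.
Proof. by rewrite -expr2 sqrr_sign. Qed.

Lemma sign_neq0 (a : nat) : (-1) ^+ a != 0 :> k.
Proof. by rewrite signr_eq0. Qed.

End S.
Section L.
Variable T : finType.

Definition dj (s F : {set T}) := forall x, x \in s -> x \notin F.

Lemma memLink (G : {set {set T}}) F s :
  s \in link G F <-> dj s F /\ s :|: F \in G.
Proof.
rewrite /link; split.
- case/imsetP => a; rewrite inE => /andP [aG Fa] ->; split.
    by move=> x; rewrite inE => /andP [].
  have -> : a :\: F :|: F = a.
    apply/setP => x; rewrite !inE; case xF: (x \in F) => //=.
      by rewrite (subsetP Fa).
    by rewrite orbF.
  done.
- move=> [D sG]; apply/imsetP; exists (s :|: F); first by rewrite inE sG subsetUr.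
  apply/setP => x; rewrite !inE; case xs: (x \in s) => //=.
    by rewrite (D x xs).
  by case: (x \in F); rewrite ?andbF ?andbT.
Qed.

Lemma link_complex (G : {set {set T}}) F :
  is_complex G -> F \in G -> is_complex (link G F).
Proof.
move=> [G0 GC] FG; split.
  apply/memLink; split; first by move=> x; rewrite inE.
  by rewrite set0U.
move=> s t /memLink [D sG] ts; apply/memLink; split.
  by move=> x xt; apply: D; apply: (subsetP ts).
apply: GC sG _; exact: setSU.
Qed.

Lemma link0 (G : {set {set T}}) : link G set0 = G.
Proof.
apply/setP => s; apply/idP/idP.
  by move/memLink => [_]; rewrite setU0.
by move=> sG; apply/memLink; split; [move=> x; rewrite inE | rewrite setU0].
Qed.

Lemma link_link (G : {set {set T}}) (F : {set T}) (v : T) : v \notin F ->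
  link (link G F) [set v] = link G (v |: F).
Proof.
move=> vF; apply/setP => s; apply/idP/idP.
- move/memLink => [D1 /memLink [D2 sG]]; apply/memLink; split.
    move=> x xs; rewrite !inE negb_or; apply/andP; split.
      by have := D1 x xs; rewrite inE.
    by apply: D2; rewrite inE xs.
  suff -> : s :|: (v |: F) = s :|: [set v] :|: F by [].
  by apply/setP => x; rewrite !inE; case: (x \in s); case: (x == v).
- move/memLink => [D sG]; apply/memLink; split.
    move=> x xs; have := D x xs; rewrite !inE negb_or => /andP [] //.
  apply/memLink; split.
    move=> x; rewrite !inE => /orP [xs|/eqP ->] //.
    by have := D x xs; rewrite !inE negb_or => /andP [].
  suff <- : s :|: (v |: F) = s :|: [set v] :|: F by [].
  by apply/setP => x; rewrite !inE; case: (x \in s); case: (x == v).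
Qed.

End L.
Section V.
Variables (T : finType) (k : fieldType) (v : T).

Definition rho (s : {set T}) : k :=
  (-1) ^+ #|[set w in s | enum_rank v < enum_rank w]%N|.

Lemma sg_addv (s : {set T}) (u : T) : v \notin s ->
  sg k (v |: s) u = sg k s u * (-1) ^+ (enum_rank v < enum_rank u)%N.
Proof.
move=> vs; rewrite /sg (card_sep (fun w => enum_rank w < enum_rank u)%N) //.
by rewrite sign_add mulrC.
Qed.

Lemma rho_addu (s : {set T}) (u : T) : u \notin s ->
  rho (u |: s) = rho s * (-1) ^+ (enum_rank v < enum_rank u)%N.
Proof.
move=> us; rewrite /rho (card_sep (fun w => enum_rank v < enum_rank w)%N) //.
by rewrite sign_add mulrC.
Qed.

Lemma sg_rho (t : {set T}) : v \notin t -> sg k t v * rho t = (-1) ^+ #|t|.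
Proof.
move=> vt; rewrite /sg /rho -sign_add -(cardsID [set w | enum_rank w < enum_rank v]%N t).
congr (_ ^+ (_ + _)); apply: eq_card => w; rewrite !inE //.
case wt: (w \in t); rewrite ?andbF ?andbT //=.
have wv : w != v by apply: contraNneq vt => <-.
have neq : enum_rank v != enum_rank w.
  by apply: contra wv => /eqP /enum_rank_inj ->.
by case: (ltngtP (enum_rank v) (enum_rank w)) neq => // /val_inj ->; rewrite eqxx.
Qed.

Definition lam (c : {set T} -> k) (s : {set T}) : k :=
  if v \in s then 0 else rho s * c (v |: s).

Lemma bdU_lam (c : {set T} -> k) (s : {set T}) : v \notin s -> bdU (lam c) s = rho s * bdU c (v |: s).
Proof.
move=> vs; rewrite /bdU (bigD1 v) /=; last by rewrite inE.
rewrite {1}/lam setU11 mulr0 add0r mulr_sumr.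
apply: eq_big => [u|u].
  by rewrite !inE; case: (u == v); rewrite ?andbT ?andbF.
move=> /andP [us uv]; rewrite inE in us.
rewrite /lam !inE eq_sym (negbTE uv) (negbTE vs) /= sg_addv // rho_addu //.
rewrite setUCA.
ring.
Qed.

End V.
Section W.
Variables (T : finType) (k : fieldType).

Lemma memL (G : {set {set T}}) (v : T) (s : {set T}) :
  s \in link G [set v] <-> v \notin s /\ v |: s \in G.
Proof.
rewrite memLink setUC; split => -[D H]; split => //.
  by apply/negP => /D; rewrite inE eqxx.
by move=> x xs; rewrite inE; apply: contraNneq D => <-.
Qed.

Lemma sign_const (D : {set {set T}}) j (z : {set T} -> k) : is_chain D j z ->
  exists e : k, e * e = 1 /\ forall t : {set T}, (-1) ^+ #|t| * z t = e * z t.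
Proof.
move=> Hz; case E: (j + 1) => [n|n].
  exists ((-1) ^+ n); split; first exact: sign_sq.
  move=> t; case: (eqVneq (z t) 0) => [->|nz]; first by rewrite !mulr0.
  have [_ ] := Hz t nz; rewrite E => -[->] //.
exists 1; split; first by rewrite mulr1.
move=> t; case: (eqVneq (z t) 0) => [->|nz]; first by rewrite !mulr0.
by have [_ ] := Hz t nz; rewrite E.
Qed.

Lemma vertex_step (G : {set {set T}}) (v : T) (W : {set T}) (j : int) :
  is_complex G -> W \subset vert (link G [set v]) ->
  HnzU k (induced (link G [set v]) W) j ->
  HnzU k (induced G (v |: W)) (j + 1) \/ HnzU k (induced G W) j.
Proof.
move=> [G0 GC] WL [z [Hz Hcyc Hnb]].
have vW : v \notin W.
  apply/negP => /(subsetP WL); rewrite inE => /memL [] /negP; rewrite inE; by [].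
have zS : forall s : {set T}, z s != 0 ->
    [/\ v \notin s, v |: s \in G, s \subset W & #|s|%:Z = j + 1].
  move=> s /Hz []; rewrite inE => /andP [/memL [vs sG] sW] c; by split.
have zv : forall s : {set T}, v \in s -> z s = 0.
  move=> s vs; apply/eqP; apply: contraT => /zS [] /negP; by [].
have [e [ee He]] := sign_const Hz.
pose Z (s : {set T}) := if v \in s then rho k v (s :\ v) * z (s :\ v) else 0.
have lamZ : lam v Z =1 z.
  move=> s; rewrite /lam; case: ifPn => [vs|vs]; first by rewrite zv.
  by rewrite /Z setU11 setU1K // mulrA sign_sq mul1r.
have bdZ : forall t : {set T}, bdU Z t = e * z t.
  move=> t; case: (boolP (v \in t)) => vt.
    rewrite zv // mulr0.
    have vs : v \notin t :\ v by rewrite !inE eqxx.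
    have := bdU_lam Z vs; rewrite (bdU_ext _ lamZ) Hcyc setD1K //.
    move/esym/eqP; rewrite mulf_eq0 => /orP [|/eqP //]; by rewrite (negbTE (sign_neq0 _ _)).
  rewrite /bdU (bigD1 v) /=; last by rewrite inE.
  rewrite big1 ?addr0; last first.
    move=> u /andP [ut uv]; rewrite /Z !inE eq_sym (negbTE uv) (negbTE vt) /=.
    by rewrite mulr0.
  rewrite /Z setU11 setU1K // mulrA sg_rho //.
case: (classic (exists b, is_chain (induced G W) (j + 1) b /\
                   forall t, bdU b t = z t)) => [[b [Hb Eb]]|NB]; last first.
  right; exists z; split => //.
  move=> s nz; have [vs sG sW c] := zS s nz; split => //.
  by rewrite inE sW andbT; apply: GC sG _; apply: subsetUr.
left; exists (fun s => Z s - e * b s); split.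
- move=> s nz.
  have [Zn|bn] : Z s != 0 \/ b s != 0.
    case: (eqVneq (Z s) 0) => [Z0|]; last by left.
    case: (eqVneq (b s) 0) => [b0|]; last by right.
    by move: nz; rewrite Z0 b0 mulr0 subrr eqxx.
  + move: Zn; rewrite /Z; case: ifPn => [vs|_]; last by rewrite eqxx.
    rewrite mulf_eq0 negb_or => /andP [_ /zS [_ sG sW c]].
    rewrite setD1K // in sG; split.
      rewrite inE sG /=; apply/subsetP => x xs; rewrite !inE.
      case: eqP => //= xv; apply: (subsetP sW); rewrite !inE xs andbT.
      by apply/eqP.
    rewrite (cardsD1 v s) vs PoszD c; lia.
  + have [] := Hb s bn; rewrite inE => /andP [sG sW] c; split => //.
    rewrite inE sG /=; apply: (subset_trans sW); exact: subsetUr.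
- move=> t; rewrite bdU_lin bdZ Eb; exact: subrr.
- move=> [c [Hc Ec]]; apply: Hnb; exists (lam v c); split.
  + move=> s; rewrite /lam; case: ifPn => [_|vs]; first by rewrite eqxx.
    rewrite mulf_eq0 negb_or => /andP [_ /Hc []]; rewrite inE => /andP [sG sW] cc.
    split.
      rewrite inE; apply/andP; split; first by apply/memL.
      apply/subsetP => x xs; have := subsetP sW x; rewrite !inE xs orbT => /(_ isT).
      case/orP => // /eqP xv; move: vs; rewrite -xv xs; by [].
    move: cc; rewrite cardsU1 vs PoszD; lia.
  + move=> t; case: (boolP (v \in t)) => vt.
      rewrite zv // /bdU big1 // => u _; rewrite /lam !inE vt orbT mulr0 //.
    rewrite bdU_lam // Ec /Z setU11 setU1K //.
    have -> : b (v |: t) = 0.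
      apply/eqP; apply: contraT => /Hb []; rewrite inE => /andP [_ /subsetP sW] _.
      by move: (sW v); rewrite setU11 (negbTE vW) => /(_ isT).
    by rewrite mulr0 subr0 mulrA sign_sq mul1r.
Qed.

End W.
Section F.
Variables (T : finType) (k : fieldType).

Lemma Mwit_step (G : {set {set T}}) (v : T) (i : nat) (W : {set T}) :
  is_complex G -> [set v] \in G -> Mwit k (link G [set v]) i W ->
  exists W' : {set T}, Mwit k G i W' /\ (#|W| <= #|W'|)%N.
Proof.
move=> GG vG [WL HW]; have [G0 GC] := GG.
have vW : v \notin W.
  apply/negP => /(subsetP WL); rewrite inE => /memL [] /negP; rewrite inE; by [].
have WG : W \subset vert G.
  apply/subsetP => w /(subsetP WL); rewrite !inE => /memL [_ H].
  by apply: GC H _; apply: subsetUr.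
move/Hnz_U: HW => /vertex_step -/(_ GG WL) [HA|HB].
- exists (v |: W); split; last by rewrite cardsU1 vW.
  split.
    apply/subsetP => x; rewrite !inE => /orP [/eqP ->|xW]; first by [].
    by have := subsetP WG x xW; rewrite inE.
  apply/Hnz_U; move: HA.
  have -> : #|v |: W|%:Z - i%:Z - 1 = #|W|%:Z - i%:Z - 1 + 1.
    rewrite cardsU1 vW PoszD; lia.
  by [].
- exists W; split => //; split => //; exact/Hnz_U.
Qed.

Lemma Mwit_gen (G : {set {set T}}) (i : nat) (n : nat) : forall (F : {set T}),
  #|F| = n -> is_complex G -> F \in G -> forall W, Mwit k (link G F) i W ->
  exists W' : {set T}, Mwit k G i W' /\ (#|W| <= #|W'|)%N.
Proof.
elim: n => [|n IH] F cF GG FG W HW.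
  move/eqP: cF; rewrite cards_eq0 => /eqP F0; move: HW; rewrite F0 link0 => HW.
  by exists W.
have [v vF] : exists v, v \in F.
  by apply/set0Pn; rewrite -card_gt0 cF.
set F0 := F :\ v.
have vF0 : v \notin F0 by rewrite !inE eqxx.
have eF : F = v |: F0 by rewrite setD1K.
have F0G : F0 \in G by have [_ GC] := GG; apply: GC FG _; apply: subsetDl.
have cF0 : #|F0| = n by move: cF; rewrite /F0 (cardsD1 v F) vF /=; lia.
have LG := link_complex GG F0G.
have vL : [set v] \in link G F0.
  apply/memLink; split; first by move=> x; rewrite !inE => /eqP ->; rewrite eqxx.
  by rewrite -eF.
move: HW; rewrite eF -link_link // => HW.
have [W1 [HW1 c1]] := Mwit_step LG vL HW.
have [W2 [HW2 c2]] := IH F0 cF0 GG F0G W1 HW1.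
exists W2; split => //; exact: leq_trans c1 c2.
Qed.

Lemma exmax (P : nat -> Prop) B : (exists n, P n) -> (forall n, P n -> (n <= B)%N) ->
  exists m, P m /\ forall n, P n -> (n <= m)%N.
Proof.
move=> [n0 P0] HB; apply: NNPP => NM.
have H : forall m, P m -> exists n, P n /\ (m < n)%N.
  move=> m Pm; apply: NNPP => NE; apply: NM; exists m; split=> // n Pn.
  rewrite leqNgt; apply/negP => mn; apply: NE; by exists n.
have : forall t, exists n, P n /\ (t <= n)%N.
  elim=> [|t [n [Pn tn]]]; first by exists n0.
  have [n' [Pn' nn']] := H n Pn; exists n'; split => //; exact: leq_ltn_trans tn nn'.
move=> /(_ B.+1) [n [Pn Bn]]; have := HB n Pn; lia.
Qed.

End F.

Theorem lemma4p1 (k : fieldType) (T : finType) (Gamma : {set {set T}})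
  (d n : nat) (F : {set T}) (d' : int) (n' : nat) :
  is_complex Gamma ->
  dimC Gamma = d%:Z - 1 ->
  #|vert Gamma| = n ->
  F \in Gamma ->
  dimC (link Gamma F) = d' ->
  #|vert (link Gamma F)| = n' ->
  forall (i m : nat), (1 <= i)%N -> i%:Z <= n'%:Z - d' ->
    isM k (link Gamma F) i m ->
    exists m' : nat, isM k Gamma i m' /\ (m <= m')%N.
Proof.
move=> GG _ _ FG _ _ i m _ _ [[W [HW cW]] _].
have [W' [HW' c']] := Mwit_gen (erefl #|F|) GG FG HW.
pose P := fun n => exists W, Mwit k Gamma i W /\ #|W| = n.
have HB : forall n0, P n0 -> (n0 <= #|T|)%N.
  by move=> n0 [W0 [_ <-]]; exact: max_card.
have HE : exists n0, P n0 by exists #|W'|, W'.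
have [m' [[W2 [HW2 c2]] Hm]] := exmax HE HB.
exists m'; split.
  split; first by exists W2.
  by move=> W3 H3; apply: Hm; exists W3.
rewrite -cW; apply: leq_trans c' _; apply: Hm; by exists W'.
Qed.
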